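(* Let $G$ and $H$ be finite abelian groups, written additively, of the same even order $k>2$, let $f:G\to H$ be semi-planar, and suppose $S(G,H;f)$ splits into two substructures $S_1$ and $S_2$ with $\mathcal{L}(0,0)\in S_1$. For $i=1,2$ and $a\in G$ let $P_a^i=\{b\in H : \mathcal{L}(a,b)\in S_i\}$, and let $S(a,b)=\{t\in G : f(t-a)=f(t)+b\}$. Then for every non-zero $a\in G$, $$P_a^1=\{b\in H : |S(a,b)|=2\},\qquad P_a^2=\{b\in H : |S(a,b)|=0\}.$$
   Context: A function $f:G\to H$ is semi-planar if for every non-identity $a\in G$ and every $y\in H$, the equation $f(x+a)-f(x)=y$ has either $0$ or $2$ solutions $x\in G$. The incidence structure $S(G,H;f)$ has points $(x,y)\in G\times H$ and lines $\mathcal{L}(a,b)$ for $(a,b)\in G\times H$, with $(x,y)$ incident with $\mathcal{L}(a,b)$ iff $y=f(x-a)+b$. Its incidence graph is the bipartite graph on points and lines with an edge for each incident pair. $S(G,H;f)$ splits into two substructures $S_1,S_2$ if its incidence graph has exactly two connected components; $S_1$ and $S_2$ are the incidence structures formed by the points and lines of the two components, and $\mathcal{L}(a,b)\in S_i$ means the line lies in component $S_i$. *)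

(* Defs.v *)
From mathcomp Require Import all_boot all_order all_algebra.
Set Implicit Arguments. Unset Strict Implicit. Unset Printing Implicit Defensive.
Import GRing.Theory.
Local Open Scope ring_scope.

Definition semiplanar (G H : finZmodType) (f : G -> H) : Prop :=
  forall (a : G) (y : H), a != 0 ->
    #|[set x : G | f (x + a) - f x == y]| = 0%N \/
    #|[set x : G | f (x + a) - f x == y]| = 2%N.

(* Vertices of the incidence graph of S(G,H;f): inl (x,y) is the point (x,y),
   inr (a,b) is the line L(a,b). *)
Definition vertex (G H : finZmodType) := ((G * H) + (G * H))%type.

Definition incident (G H : finZmodType) (f : G -> H) (p l : G * H) : bool :=
  p.2 == f (p.1 - l.1) + l.2.

Definition incid_graph (G H : finZmodType) (f : G -> H) : rel (vertex G H) :=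
  fun u v => match u, v with
             | inl p, inr l => incident f p l
             | inr l, inl p => incident f p l
             | _, _ => false
             end.

(* S(G,H;f) splits into two substructures: the incidence graph has exactly
   two connected components. *)
Definition splits_in_two (G H : finZmodType) (f : G -> H) : Prop :=
  n_comp (incid_graph f) [pred _ : vertex G H | true] = 2%N.

Definition in_S1 (G H : finZmodType) (f : G -> H) (a : G) (b : H) : bool :=
  connect (incid_graph f) (inr (0, 0)) (inr (a, b)).

Definition in_S2 (G H : finZmodType) (f : G -> H) (a : G) (b : H) : bool :=
  ~~ in_S1 f a b.

Definition P1 (G H : finZmodType) (f : G -> H) (a : G) : {set H} :=
  [set b | in_S1 f a b].
Definition P2 (G H : finZmodType) (f : G -> H) (a : G) : {set H} :=
  [set b | in_S2 f a b].

Definition Sab (G H : finZmodType) (f : G -> H) (a : G) (b : H) : {set G} :=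
  [set t | f (t - a) == f t + b].

(* Main.v *)
Require Import Defs.
From mathcomp Require Import all_boot all_order all_algebra.
From mathcomp Require Import zify.
Set Implicit Arguments. Unset Strict Implicit. Unset Printing Implicit Defensive.
Import GRing.Theory.
Local Open Scope ring_scope.

Section Proof.
Variables (G H : finZmodType) (f : G -> H).
Local Notation e := (incid_graph f).

Lemma e_sym : symmetric e.
Proof. by case=> [p|l] [q|m]. Qed.

Lemma csym : connect_sym e.
Proof. exact: sym_connect_sym e_sym. Qed.

Definition tr (c : G) (d : H) (v : vertex G H) : vertex G H :=
  match v with inl p => inl (p.1 + c, p.2 + d) | inr l => inr (l.1 + c, l.2 + d) end.

Lemma e_tr c d u v : e (tr c d u) (tr c d v) = e u v.
Proof.
have key : forall x y a b,
    incident f (x + c, y + d) (a + c, b + d) = incident f (x, y) (a, b).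
  move=> x y a b; rewrite /incident /=.
  by rewrite opprD addrACA subrr addr0 addrA (inj_eq (addIr d)).
by case: u => [[x y]|[a b]]; case: v => [[x' y']|[a' b']] //=; rewrite key.
Qed.

Lemma connect_tr c d u v : connect e u v -> connect e (tr c d u) (tr c d v).
Proof.
case/connectP=> p pth ->; apply/connectP; exists (map (tr c d) p).
  by elim: p u pth => //= w p IH u /andP[euw pw]; rewrite e_tr euw IH.
by rewrite last_map.
Qed.

Definition chi a b := connect e (inr (0,0)) (inr (a,b)).

Lemma chi_add a b a' b' : chi a b -> chi a' b' -> chi (a + a') (b + b').
Proof.
move=> h1 h2; apply: connect_trans h1 _.
have := connect_tr a b h2; rewrite /= !add0r.
by rewrite (addrC a') (addrC b').
Qed.

Lemma chi_opp a b : chi a b -> chi (-a) (-b).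
Proof.
move=> h; have := connect_tr (-a) (-b) h; rewrite /= !add0r !subrr => h'.
by rewrite /chi csym.
Qed.

Lemma chi_common a b x : f x = f (x - a) + b -> chi a b.
Proof.
move=> h; apply: (connect_trans (y:=inl (x, f x))); apply: connect1 => /=;
  by rewrite /incident /= ?subr0 ?addr0 -?h.
Qed.

Hypothesis hsplit : splits_in_two f.

Let R := [set x | roots e x].

Lemma cardR : #|R| = 2%N.
Proof. have := hsplit; rewrite /splits_in_two /n_comp_mem => <-; apply: eq_card => x; by rewrite !inE andbT. Qed.

Lemma two_comp u v : ~~ connect e (inr (0,0)) u -> ~~ connect e (inr (0,0)) v ->
  connect e u v.
Proof.
move=> nu nv; set r0 := fingraph.root e (inr (0,0)).
have r0R : r0 \in R by rewrite inE roots_root //; exact: csym.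
have h1 : #|R :\ r0| == 1%N by move: (cardsD1 r0 R); rewrite r0R cardR /=; lia.
case/cards1P: h1 => z hz.
have ruR : fingraph.root e u \in R :\ r0.
  rewrite !inE roots_root ?andbT; last exact: csym.
  apply/negP => /eqP/(fingraph.rootP csym) h; by rewrite csym h in nu.
have rvR : fingraph.root e v \in R :\ r0.
  rewrite !inE roots_root ?andbT; last exact: csym.
  apply/negP => /eqP/(fingraph.rootP csym) h; by rewrite csym h in nv.
rewrite hz !inE in ruR rvR.
apply/(fingraph.rootP csym); by rewrite (eqP ruR) (eqP rvR).
Qed.

Lemma exists_nc : exists v, ~~ connect e (inr (0,0)) v.
Proof.
case: (pickP (fun v => ~~ connect e (inr (0,0)) v)) => [v hv|h]; first by exists v.
have: (#|R| <= 1)%N.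
  rewrite -(cards1 (fingraph.root e (inr (0,0)))); apply/subset_leq_card/subsetP => x.
  rewrite !inE => /eqP <-; apply/eqP/(fingraph.rootP csym).
  rewrite csym; by have := h x => /= /negbFE.
by rewrite cardR.
Qed.

Lemma exists_line : exists a b, ~~ chi a b.
Proof.
case: exists_nc => [[[x y]|[a b]] hv]; last by exists a, b.
exists 0, (y - f x); apply: contra hv => hc.
apply: connect_trans hc _; apply: connect1 => /=.
by rewrite /incident /= subr0 addrC subrK.
Qed.

Lemma exists_d0 : exists d0, ~~ chi 0 d0.
Proof.
case: (pickP (fun d => ~~ chi 0 d)) => [d hd|h]; first by exists d.
case: exists_line => a [b hab]; exfalso; move/negP: hab; apply.
have h1 : chi a (f 0 - f (-a)) by apply: (chi_common (x:=0)); rewrite sub0r addrC subrK.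
have h2 : chi 0 (b - (f 0 - f (-a))) by have := h (b - (f 0 - f (-a))) => /= /negbFE.
by have := chi_add h1 h2; rewrite addr0 addrC subrK.
Qed.

Lemma chi_diff a b a' b' : ~~ chi a b -> ~~ chi a' b' -> chi (a' - a) (b' - b).
Proof.
move=> h1 h2; have := connect_tr (-a) (-b) (two_comp h1 h2).
by rewrite /= !subrr.
Qed.

Lemma chi_double c : chi 0 (c + c).
Proof.
case hc: (chi 0 c); first by have := chi_add hc hc; rewrite addr0.
have hc' : ~~ chi 0 (- c).
  apply/negP => /chi_opp; by rewrite oppr0 opprK hc.
have := chi_diff hc' (negbT hc); by rewrite subr0 opprK.
Qed.

Lemma chi_neg a b : chi a b = chi a (-b).
Proof.
apply/idP/idP => h.
  by have := chi_add h (chi_double (-b)); rewrite addr0 addrA subrr add0r.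
by have := chi_add h (chi_double b); rewrite addr0 addrA addNr add0r.
Qed.

End Proof.

Section Count.
Variables (G H : finZmodType) (f : G -> H) (a : G).
Hypothesis hf : semiplanar f.
Hypothesis ha : a != 0.

Lemma Sab_eq b : Sab f a b = [set x : G | f (x + - a) - f x == b].
Proof. by apply/setP => t; rewrite !inE subr_eq (addrC b). Qed.

Lemma S02 b : #|Sab f a b| = 0%N \/ #|Sab f a b| = 2%N.
Proof. by rewrite Sab_eq; apply: hf; rewrite oppr_eq0. Qed.

Lemma sumS : (\sum_(b : H) #|Sab f a b| = #|G|)%N.
Proof.
rewrite -sum1_card (partition_big (fun t => f (t - a) - f t) predT) //=.
apply: eq_bigr => b _; rewrite -sum1_card; apply: eq_bigl => t.
by rewrite !inE subr_eq (addrC b).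
Qed.

Lemma cardN : (#|[set b | #|Sab f a b| == 2%N]| * 2 = #|G|)%N.
Proof.
rewrite -sumS -sum_nat_const big_mkcond /=; apply: eq_bigr => b _.
rewrite inE; case: (S02 b) => ->; by [].
Qed.
End Count.

Theorem lemma4 (G H : finZmodType) (k : nat) (f : G -> H)
  (hG : #|G| = k) (hH : #|H| = k) (hk_even : ~~ odd k) (hk : (2 < k)%N)
  (hf : semiplanar f) (hsplit : splits_in_two f) :
  forall a : G, a != 0 ->
    P1 f a = [set b : H | #|Sab f a b| == 2%N] /\
    P2 f a = [set b : H | #|Sab f a b| == 0%N].
Proof.
move=> a ha.
set N := [set b : H | #|Sab f a b| == 2%N].
have hN := cardN hf ha; rewrite -/N in hN.
case: (exists_d0 hsplit) => d0 hd0.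
set Pa := [set b | chi f a b].
set M := [set b | - b \in N].
set M' := [set b | - (b - d0) \in N].
have cM : #|M| = #|N|.
  rewrite -(card_preimset N (@oppr_inj H)); apply: eq_card => b; by rewrite !inE.
have cM' : #|M'| = #|N|.
  have inj : injective (fun b : H => - (b - d0)).
    by move=> x y /oppr_inj /addIr.
  rewrite -(card_preimset N inj); apply: eq_card => b; by rewrite !inE.
have sM : M \subset Pa.
  apply/subsetP => b; rewrite !inE => hb.
  have : Sab f a (-b) != set0.
    by apply/eqP => h0; rewrite h0 cards0 in hb.
  case/set0Pn => t; rewrite inE => /eqP ht.
  apply: (chi_common (x:=t)); by rewrite ht subrK.
have sM' : M' \subset ~: Pa.
  apply/subsetP => b hb; rewrite !inE; apply/negP => hc.
  have hb' : b - d0 \in Pa by apply: (subsetP sM); rewrite inE; rewrite inE in hb.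
  rewrite inE in hb'.
  have := chi_add (chi_opp hb') hc; rewrite addNr opprB subrK => h.
  by rewrite h in hd0.
have lM := subset_leq_card sM; have lM' := subset_leq_card sM'.
have hC := cardsC Pa.
have ePa : Pa = M.
  apply/eqP; rewrite eq_sym eqEcard sM /= cM.
  rewrite cM' in lM'; rewrite hH in hC; rewrite hG in hN.
  move: lM' hC hN; move: (#|~: Pa|) (#|Pa|) (#|N|) => x y z; lia.
have key : forall b, in_S1 f a b = (b \in N).
  move=> b; rewrite -[in_S1 f a b]/(chi f a b) (chi_neg hsplit) .
  have : (-b \in Pa) = (-b \in M) by rewrite ePa.
  by rewrite !inE opprK.
split; apply/setP => b; rewrite !inE.
  by rewrite key inE.
rewrite /in_S2 key inE; case: (S02 hf ha b) => ->; by [].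
Qed.
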